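(* Let $nw=(a_1\cdots a_n,\nu)\in\mathrm{NW}(\Delta)$, with $\Phi_\circ(nw)=([n],\lambda,\le_1^\circ,\le_2^\circ)$ and $\Phi_\bullet(nw)=([n],\lambda,\le_1^\bullet,\le_2^\bullet)$, and let $1\le i<j\le n$. Then the following are equivalent: (i) $j\le_2^\circ i$; (ii) $i\le_2^\bullet j$; (iii) there exists $(k,\ell)\in\nu$ with $1\le k\le i<j\le\ell\le n$ such that $k$ has odd nesting depth and there is no $(k',\ell')\in\nu$ with $k<k'\le i<j\le\ell'<\ell$.
   Context: Nested words: $\Delta$ finite alphabet. A nesting relation of width $n$ is a relation $\nu$ on $[n]=\{1..n\}$ with: $\nu(i,j)\Rightarrow i<j$; $\nu(i,j),\nu(i,j')\Rightarrow j=j'$ and $\nu(i,j),\nu(i',j)\Rightarrow i=i'$; $\nu(i,j),\nu(i',j'),i<i'\Rightarrow j<i'$ or $j'<j$. A nested word is $(w,\nu)$ with $w=a_1\cdots a_n\in\Delta^+$ and $\nu$ a nesting relation of width $n$; $\mathrm{NW}(\Delta)$ is their set. If $\nu(i,j)$, $i$ is a call and $j$ a return position. The factor $nw[i,j]$ ($i\le j$) is $(a_i\cdots a_j,\{(k-i+1,\ell-i+1):(k,\ell)\in\nu,\ i\le k,\ell\le j\})$. The nesting depth of a call position $k$ is the number of pairs $(k',\ell')\in\nu$ with $k'\le k\le\ell'$ (the number of calls open at $k$, including $k$ itself). Texts: a text over $\Delta$ is $(V,\lambda,\le_1,\le_2)$ with $V$ finite nonempty, $\lambda:V\to\Delta$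 and $\le_1,\le_2$ linear orders on $V$, considered up to isomorphism. For texts on disjoint domains $V,V'$: $\tau\circ\tau'=(V\cup V',\lambda\cup\lambda',\le_1\cup\le_1'\cup V\times V',\le_2\cup\le_2'\cup V\times V')$ and $\tau\bullet\tau'=(V\cup V',\lambda\cup\lambda',\le_1\cup\le_1'\cup V\times V',\le_2\cup\le_2'\cup V'\times V)$. A letter $a$ also denotes the singleton text labeled $a$. Encodings $\Phi_\circ,\Phi_\bullet:\mathrm{NW}(\Delta)\to$ texts, defined recursively: for $nw=(a_1\cdots a_n,\nu)$, if $\nu=\emptyset$ then $\Phi_\circ(nw)=a_1\circ\cdots\circ a_n$ and $\Phi_\bullet(nw)=a_1\bullet\cdots\bullet a_n$; otherwise let $i$ be the least call position, $j$ its return position, $nw'=nw[i+1,j-1]$, $nw''=nw[j+1,n]$, and $\Phi_\circ(nw)=a_1\circ\cdots\circ a_{i-1}\circ(a_i\bullet\Phi_\bullet(nw')\bullet a_j)\circ\Phi_\circ(nw'')$, $\Phi_\bullet(nw)=a_1\bullet\cdots\bullet a_{i-1}\bullet(a_i\circ\Phi_\circ(nw')\circ a_j)\bullet\Phi_\bullet(nw'')$, where factors for empty intervals ($i+1=j$, $j=n$, $i=1$) are omitted. The domain of $\Phi_\circ(nw)$ and of $\Phi_\bullet(nw)$ is identified with $[n]$ so that $\le_1$ is the natural order of $[n]$ and position $i$ is labeled $a_i$. *)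

(* Defs.v *)
From mathcomp Require Import all_boot.
Set Implicit Arguments. Unset Strict Implicit. Unset Printing Implicit Defensive.

(* A nested word of width n is a word w : seq Delta with n = size w >= 1 and a
   relation nu on [n] = {1..n}, given as the (finite) list of its pairs.
   Positions are 1-based natural numbers. *)
Definition nesting_relation (n : nat) (nu : seq (nat * nat)) : Prop :=
  (forall i j, (i, j) \in nu -> 1 <= i <= n /\ 1 <= j <= n) /\
  (forall i j, (i, j) \in nu -> i < j) /\
  (forall i j j', (i, j) \in nu -> (i, j') \in nu -> j = j') /\
  (forall i i' j, (i, j) \in nu -> (i', j) \in nu -> i = i') /\
  (forall i j i' j', (i, j) \in nu -> (i', j') \in nu -> i < i' -> j < i' \/ j' < j).

Definition nested_word (Delta : finType) (w : seq Delta) (nu : seq (nat * nat)) : Prop :=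
  0 < size w /\ nesting_relation (size w) nu.

(* nesting depth of a (call) position k: number of pairs (k',l') of nu with
   k' <= k <= l' (nu viewed as a set, hence [undup]). *)
Definition nesting_depth (nu : seq (nat * nat)) (k : nat) : nat :=
  count (fun p => (p.1 <= k) && (k <= p.2)) (undup nu).

(* A text whose domain is a finite set of positions (nats) is represented by the
   enumerations of its domain in increasing <=_1 order and <=_2 order.
   (Labels are lambda(i) = a_i and play no role below.)  The empty text
   ([::],[::]) is only used as a neutral element, modelling "omitted factors". *)
Record text := Text { ord1 : seq nat; ord2 : seq nat }.

Definition tnil : text := Text [::] [::].
Definition tsingle (x : nat) : text := Text [:: x] [:: x].

Definition tcirc (t t' : text) : text := Text (ord1 t ++ ord1 t') (ord2 t ++ ord2 t').
Definition tbullet (t t' : text) : text := Text (ord1 t ++ ord1 t') (ord2 t' ++ ord2 t).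

Definition top (b : bool) : text -> text -> text := if b then tcirc else tbullet.

Definition tseq (b : bool) (s : seq nat) : text := foldr (fun x t => top b (tsingle x) t) tnil s.

Definition le2 (t : text) (x y : nat) : bool := index x (ord2 t) <= index y (ord2 t).

(* [phi fuel b nu lo hi] encodes the factor nw[lo,hi] (positions kept absolute,
   which is the identification of the domain with positions); b = true gives
   Phi_circ, b = false gives Phi_bullet.  The fuel only ensures termination
   (the interval shrinks strictly at each recursive call). *)
Fixpoint phi (fuel : nat) (b : bool) (nu : seq (nat * nat)) (lo hi : nat) : text :=
  match fuel with
  | 0 => tnil
  | f.+1 =>
    let pos := iota lo (hi.+1 - lo) in
    let calls := [seq k <- pos | has (fun p => (p.1 == k) && (p.2 <= hi)) nu] in
    match calls with
    | [::] => tseq b pos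
    | i :: _ =>
      let j := (nth (0, 0) nu (find (fun p => p.1 == i) nu)).2 in
      top b (tseq b (iota lo (i - lo)))
        (top b (top (~~ b) (top (~~ b) (tsingle i) (phi f (~~ b) nu i.+1 j.-1)) (tsingle j))
               (phi f b nu j.+1 hi))
    end
  end.

Definition Phi_circ (Delta : finType) (w : seq Delta) (nu : seq (nat * nat)) : text :=
  phi (size w).+1 true nu 1 (size w).
Definition Phi_bullet (Delta : finType) (w : seq Delta) (nu : seq (nat * nat)) : text :=
  phi (size w).+1 false nu 1 (size w).

(* Main.v *)
Require Import Defs.
From mathcomp Require Import all_boot zify.
Set Implicit Arguments. Unset Strict Implicit. Unset Printing Implicit Defensive.

Definition prec (s : seq nat) x y := index x s < index y s.

Lemma prec_catr s s2 x y : prec s x y -> prec (s ++ s2) x y.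
Proof.
rewrite /prec !index_cat => h.
have hx : x \in s by rewrite -index_mem (leq_trans h) // index_size.
rewrite hx; case: ifP => // _.
by rewrite (leq_trans h) // (leq_trans (index_size _ _)) // leq_addr.
Qed.

Lemma prec_catl s1 s x y : x \notin s1 -> y \notin s1 -> prec s x y -> prec (s1 ++ s) x y.
Proof. by rewrite /prec !index_cat => /negbTE -> /negbTE ->; rewrite ltn_add2l. Qed.

Lemma prec_mem s1 s2 x y : x \in s1 -> y \notin s1 -> prec (s1 ++ s2) x y.
Proof.
rewrite /prec !index_cat => hx /negbTE hy; rewrite hx hy.
by rewrite (leq_trans _ (leq_addr _ _)) // index_mem.
Qed.

Lemma ord2_top b X Y : ord2 (top b X Y) = if b then ord2 X ++ ord2 Y else ord2 Y ++ ord2 X.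
Proof. by case: b. Qed.

Lemma mem_top b X Y x : (x \in ord2 (top b X Y)) = (x \in ord2 X) || (x \in ord2 Y).
Proof. by rewrite ord2_top; case: b; rewrite mem_cat // orbC. Qed.

Lemma TL b X Y x y : x \in ord2 X -> y \notin ord2 X -> y \in ord2 Y -> x \notin ord2 Y ->
  prec (ord2 (top b X Y)) (if b then x else y) (if b then y else x).
Proof. by rewrite ord2_top; case: b => *; apply: prec_mem. Qed.

Lemma TX b X Y x y : prec (ord2 X) x y -> x \notin ord2 Y -> y \notin ord2 Y ->
  prec (ord2 (top b X Y)) x y.
Proof. by rewrite ord2_top; case: b => *; [apply: prec_catr|apply: prec_catl]. Qed.

Lemma TY b X Y x y : prec (ord2 Y) x y -> x \notin ord2 X -> y \notin ord2 X ->
  prec (ord2 (top b X Y)) x y.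
Proof. by rewrite ord2_top; case: b => *; [apply: prec_catl|apply: prec_catr]. Qed.

Lemma ord2_tseq b s : ord2 (tseq b s) = if b then s else rev s.
Proof.
elim: s => [|a s IH] /=; first by case: b.
by rewrite ord2_top IH; case: (b) => //=; rewrite rev_cons cats1.
Qed.

Lemma mem_tseq b s x : (x \in ord2 (tseq b s)) = (x \in s).
Proof. by rewrite ord2_tseq; case: b; rewrite ?mem_rev. Qed.

Lemma prec_tseq b lo m x y : lo <= x -> x < y -> y < lo + m ->
  prec (ord2 (tseq b (iota lo m))) (if b then x else y) (if b then y else x).
Proof.
move=> h1 h2 h3; rewrite ord2_tseq.
have -> : m = (y - lo) + (m - (y - lo)) by lia.
rewrite iotaD; case: b.
  by apply: prec_mem; rewrite mem_iota; lia.
rewrite rev_cat; apply: prec_mem; rewrite mem_rev mem_iota; lia.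
Qed.

Definition NR (nu : seq (nat * nat)) : Prop :=
  (forall i j, (i, j) \in nu -> i < j) /\
  (forall i j j', (i, j) \in nu -> (i, j') \in nu -> j = j') /\
  (forall i i' j, (i, j) \in nu -> (i', j) \in nu -> i = i') /\
  (forall i j i' j', (i, j) \in nu -> (i', j') \in nu -> i < i' -> j < i' \/ j' < j).

Definition WN (nu : seq (nat * nat)) lo hi :=
  forall k l, (k, l) \in nu -> (lo <= k <= hi) = (lo <= l <= hi).

Definition cnt (nu : seq (nat * nat)) lo x y :=
  count (fun p : nat * nat => (lo <= p.1 <= x) && (y <= p.2)) (undup nu).


Lemma cnt0 nu lo x y : (forall k l, (k,l) \in nu -> lo <= k <= x -> y <= l -> False) ->
  cnt nu lo x y = 0.
Proof.
move=> H; apply/eqP; rewrite -leqn0 leqNgt -has_count; apply/hasP => -[[k l]].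
by rewrite mem_undup /= => hin /andP[h1 h2]; apply: (H k l).
Qed.

Lemma cnt_shift nu lo lo' x y :
  (forall k l, (k,l) \in nu -> ((lo <= k <= x) && (y <= l)) = ((lo' <= k <= x) && (y <= l))) ->
  cnt nu lo x y = cnt nu lo' x y.
Proof.
move=> H; apply: eq_in_count => -[k l]; rewrite mem_undup /=; exact: H.
Qed.

Lemma cnt_plus1 nu lo lo' x y i j : (i, j) \in nu -> i < lo' ->
  (forall k l, (k,l) \in nu -> ((lo <= k <= x) && (y <= l)) =
        ((k == i) && (l == j)) || ((lo' <= k <= x) && (y <= l))) ->
  cnt nu lo x y = 1 + cnt nu lo' x y.
Proof.
move=> hij hi H.
rewrite /cnt (@eq_in_count _ _ (predU (pred1 (i,j))
   (fun p : nat * nat => (lo' <= p.1 <= x) && (y <= p.2)))); last first.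
  by move=> [k l]; rewrite mem_undup /= => /H ->; rewrite xpair_eqE.
have h0 : count (predI (pred1 (i, j)) (fun p : nat * nat => (lo' <= p.1 <= x) && (y <= p.2))) (undup nu) = 0.
  apply/eqP; rewrite -leqn0 leqNgt -has_count; apply/hasP => -[[k l]] _ /=.
  rewrite xpair_eqE; case: (k =P i) => //= ->; lia.
rewrite -[LHS]addn0 -[X in _ + X = _]h0 count_predUI count_uniq_mem ?undup_uniq //.
by rewrite mem_undup hij.
Qed.

Ltac ceq0 Hlt Hcl l0 := let k := fresh "k" in let l := fresh "l" in let hkl := fresh "hkl" in intros k l hkl ? ?; have := Hlt _ _ hkl; case: (leqP k l0) => ?;
  [case: (Hcl k l hkl ltac:(lia) ltac:(lia)) => -[? ?]; subst; lia | lia].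
Ltac ceq Hlt Hcl lo l0 := let k := fresh "k" in let l := fresh "l" in let hkl := fresh "hkl" in intros k l hkl; have := Hlt _ _ hkl; case: (leqP lo k) => ?;
  [case: (leqP k l0) => ?; [case: (Hcl k l hkl ltac:(lia) ltac:(lia)) => -[? ?]; subst; lia | lia] | lia].
Ltac side memA memB memC memI memM memR := rewrite ?memA ?memB ?memC ?memI ?memM ?memR /= ?inE; try (case: ifP => _); lia.
Lemma phi_spec nu : NR nu -> forall f b lo hi, hi.+1 - lo < f -> WN nu lo hi ->
  (forall x, (x \in ord2 (phi f b nu lo hi)) = (lo <= x <= hi)) /\
  (forall x y, lo <= x -> x < y -> y <= hi ->
     prec (ord2 (phi f b nu lo hi)) (if odd (cnt nu lo x y) == b then y else x)
                                    (if odd (cnt nu lo x y) == b then x else y)).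
Proof.
move=> [Hlt [Hfun [Hinj Hnest]]].
elim=> [|f IH] b lo hi // hf Hwn.
rewrite /=.
case E: [seq k <- iota lo (hi.+1 - lo) | _] => [|i r].
  split=> [x|x y h1 h2 h3]; first by rewrite mem_tseq mem_iota; lia.
  rewrite cnt0; last first.
    move=> k l hkl h4 h5.
    have : k \in ([::] : seq nat).
      rewrite -E mem_filter mem_iota; apply/andP; split; last lia.
      apply/hasP; exists (k, l) => //=; rewrite eqxx /=.
      have := Hwn k l hkl; lia.
    by rewrite in_nil.
  have := @prec_tseq b lo (hi.+1 - lo) x y h1 h2 ltac:(lia).
  by case: (b).
have Hcall : forall k l, (k,l) \in nu -> lo <= k <= hi -> l <= hi -> k \in i :: r.
  move=> k l hkl h1 h2; rewrite -E mem_filter mem_iota; apply/andP; split; last lia.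
  by apply/hasP; exists (k, l) => //=; rewrite eqxx.
have Hs : sorted ltn (i :: r).
  by rewrite -E; apply: sorted_filter; [exact: ltn_trans| exact: iota_ltn_sorted].
have := mem_head i r; rewrite -E mem_filter mem_iota => /andP[/hasP[[k0 l0] h0 /= /andP[/eqP ek hl]] hrange].
subst k0.
have hhas : has (fun p : nat * nat => p.1 == i) nu by apply/hasP; exists (i, l0).
have hj : nth (0, 0) nu (find (fun p : nat * nat => p.1 == i) nu) = (i, l0).
  have hm := mem_nth (0, 0) (etrans (esym (has_find _ _)) hhas).
  have hf1 := nth_find (0, 0) hhas.
  move: hm hf1; set p := nth _ _ _; case: p => a c /= hm /eqP ea; subst a.
  by rewrite (Hfun _ _ _ hm h0).
rewrite hj /=.
have hij := Hlt _ _ h0.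
have Hnocall : forall k l, (k, l) \in nu -> lo <= k -> k < i -> False.
  move=> k l hkl h1 h2.
  have hk : k \in i :: r by apply: (Hcall k l hkl); have := Hwn k l hkl; lia.
  move: Hs; rewrite /= path_sortedE; last exact: ltn_trans.
  move=> /andP[/allP ha _]; move: hk; rewrite inE => /orP[/eqP|/ha]; lia.
have Hcl : forall k l, (k, l) \in nu -> lo <= k -> k <= l0 -> (k = i /\ l = l0) \/ (i < k /\ l < l0).
  move=> k l hkl h1 h2; have hkl' := Hlt _ _ hkl.
  case: (ltngtP k i) => hki.
  - by case: (Hnocall k l hkl h1 hki).
  - case: (ltnP k l0) => hkj.
      by case: (Hnest _ _ _ _ h0 hkl hki) => h; [lia|right].
    have ekj : k = l0 by lia.
    subst k; case: (Hnest _ _ _ _ h0 hkl hij) => h; lia.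
  - by subst k; left; split=> //; apply: Hfun hkl h0.
have WB : WN nu i.+1 l0.-1.
  move=> k l hkl; have hkl' := Hlt _ _ hkl; apply/idP/idP => h.
    case: (Hnest _ _ _ _ h0 hkl ltac:(lia)) => h'; lia.
  case: (ltngtP k i) => hki.
  - case: (Hnest _ _ _ _ hkl h0 hki) => h'; lia.
  - lia.
  - subst k; have := Hfun _ _ _ hkl h0; lia.
have WC : WN nu l0.+1 hi.
  move=> k l hkl; have hkl' := Hlt _ _ hkl; have hw := Hwn k l hkl.
  apply/idP/idP => h; first lia.
  case: (leqP k l0) => hk; last lia.
  case: (leqP lo k) => hk2; last lia.
  case: (Hcl k l hkl hk2 hk) => [[]|[]]; lia.
have [memB precB] := IH (~~ b) i.+1 l0.-1 ltac:(lia) WB.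
have [memC precC] := IH b l0.+1 hi ltac:(lia) WC.
set A := tseq b (iota lo (i - lo)).
set B := phi f (~~ b) nu i.+1 l0.-1.
set C := phi f b nu l0.+1 hi.
set I := top (~~ b) (tsingle i) B.
set M := top (~~ b) I (tsingle l0).
set R := top b M C.
have memA : forall x, (x \in ord2 A) = (lo <= x < i).
  by move=> x; rewrite mem_tseq mem_iota; lia.
have memI : forall x, (x \in ord2 I) = (i <= x < l0).
  by move=> x; rewrite mem_top memB /= inE; lia.
have memM : forall x, (x \in ord2 M) = (i <= x <= l0).
  by move=> x; rewrite mem_top memI /= inE; lia.
have memR : forall x, (x \in ord2 R) = (i <= x <= hi).
  by move=> x; rewrite mem_top memM memC; lia.
split=> [x|x y h1 h2 h3]; first by rewrite mem_top memA memR; lia.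
rewrite -/B in memB precB; rewrite -/C in memC precC.
have odd1 : forall c, (odd (1 + c) == b) = (odd c == ~~ b).
  by move=> c /=; case: (odd c); case: (b).
case: (ltnP y i) => hyi.
  rewrite cnt0; last by ceq0 Hlt Hcl l0.
  have := TX b (@prec_tseq b lo (i - lo) x y h1 h2 ltac:(lia)) (Y := R) ltac:(side memA memB memC memI memM memR) ltac:(side memA memB memC memI memM memR).
  by subst A B C I M R; case: (b).
case: (ltnP x i) => hxi.
  rewrite cnt0; last by ceq0 Hlt Hcl l0.
  have := TL b (X := A) (Y := R) (x := x) (y := y) ltac:(side memA memB memC memI memM memR) ltac:(side memA memB memC memI memM memR) ltac:(side memA memB memC memI memM memR) ltac:(side memA memB memC memI memM memR).
  by subst A B C I M R; case: (b).
case: (ltnP i x) => hxi'; last first.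
  have exi : x = i by lia.
  subst x.
  case: (ltnP y l0) => hyj.
    rewrite (@cnt_plus1 nu lo i.+1 i y i l0) //; last by ceq Hlt Hcl lo l0.
    rewrite cnt0; last by move=> k l _; lia.
    have := TL (~~ b) (X := tsingle i) (Y := B) (x := i) (y := y) ltac:(side memA memB memC memI memM memR) ltac:(side memA memB memC memI memM memR) ltac:(side memA memB memC memI memM memR) ltac:(side memA memB memC memI memM memR).
    move=> /(TX (~~ b) (Y := tsingle l0)) => /(_ ltac:(side memA memB memC memI memM memR) ltac:(side memA memB memC memI memM memR)).
    move=> /(TX b (Y := C)) => /(_ ltac:(side memA memB memC memI memM memR) ltac:(side memA memB memC memI memM memR)).
    move=> /(TY b (X := A)) => /(_ ltac:(side memA memB memC memI memM memR) ltac:(side memA memB memC memI memM memR)).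
    by subst A B C I M R; case: (b).
  case: (ltnP l0 y) => hyj'.
    rewrite cnt0; last by ceq0 Hlt Hcl l0.
    have := TL b (X := M) (Y := C) (x := i) (y := y) ltac:(side memA memB memC memI memM memR) ltac:(side memA memB memC memI memM memR) ltac:(side memA memB memC memI memM memR) ltac:(side memA memB memC memI memM memR).
    move=> /(TY b (X := A)) => /(_ ltac:(side memA memB memC memI memM memR) ltac:(side memA memB memC memI memM memR)).
    by subst A B C I M R; case: (b).
  have eyj : y = l0 by lia.
  subst y.
  rewrite (@cnt_plus1 nu lo i.+1 i l0 i l0) //; last by ceq Hlt Hcl lo l0.
  rewrite cnt0; last by move=> k l _; lia.
  have := TL (~~ b) (X := I) (Y := tsingle l0) (x := i) (y := l0) ltac:(side memA memB memC memI memM memR) ltac:(side memA memB memC memI memM memR) ltac:(side memA memB memC memI memM memR) ltac:(side memA memB memC memI memM memR).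
  move=> /(TX b (Y := C)) => /(_ ltac:(side memA memB memC memI memM memR) ltac:(side memA memB memC memI memM memR)).
  move=> /(TY b (X := A)) => /(_ ltac:(side memA memB memC memI memM memR) ltac:(side memA memB memC memI memM memR)).
  by subst A B C I M R; case: (b).
case: (ltnP x l0) => hxj.
  case: (ltnP y l0) => hyj.
    rewrite (@cnt_plus1 nu lo i.+1 x y i l0) //; last by ceq Hlt Hcl lo l0.
    rewrite odd1.
    have := precB x y hxi' h2 ltac:(lia).
    move=> /(TY (~~ b) (X := tsingle i)) => /(_ ltac:(side memA memB memC memI memM memR) ltac:(side memA memB memC memI memM memR)).
    move=> /(TX (~~ b) (Y := tsingle l0)) => /(_ ltac:(side memA memB memC memI memM memR) ltac:(side memA memB memC memI memM memR)).
    move=> /(TX b (Y := C)) => /(_ ltac:(side memA memB memC memI memM memR) ltac:(side memA memB memC memI memM memR)).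
    move=> /(TY b (X := A)) => /(_ ltac:(side memA memB memC memI memM memR) ltac:(side memA memB memC memI memM memR)).
    done.
  case: (ltnP l0 y) => hyj'.
    rewrite cnt0; last by ceq0 Hlt Hcl l0.
    have := TL b (X := M) (Y := C) (x := x) (y := y) ltac:(side memA memB memC memI memM memR) ltac:(side memA memB memC memI memM memR) ltac:(side memA memB memC memI memM memR) ltac:(side memA memB memC memI memM memR).
    move=> /(TY b (X := A)) => /(_ ltac:(side memA memB memC memI memM memR) ltac:(side memA memB memC memI memM memR)).
    by subst A B C I M R; case: (b).
  have eyj : y = l0 by lia.
  subst y.
  rewrite (@cnt_plus1 nu lo x.+1 x l0 i l0) //; last by ceq Hlt Hcl lo l0.
  rewrite cnt0; last by move=> k l _; lia.
  have := TL (~~ b) (X := I) (Y := tsingle l0) (x := x) (y := l0) ltac:(side memA memB memC memI memM memR) ltac:(side memA memB memC memI memM memR) ltac:(side memA memB memC memI memM memR) ltac:(side memA memB memC memI memM memR).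
  move=> /(TX b (Y := C)) => /(_ ltac:(side memA memB memC memI memM memR) ltac:(side memA memB memC memI memM memR)).
  move=> /(TY b (X := A)) => /(_ ltac:(side memA memB memC memI memM memR) ltac:(side memA memB memC memI memM memR)).
  by subst A B C I M R; case: (b).
case: (ltnP l0 x) => hxj'.
  rewrite (@cnt_shift nu lo l0.+1 x y); last by ceq Hlt Hcl lo l0.
  have := precC x y hxj' h2 h3.
  move=> /(TY b (X := M)) => /(_ ltac:(side memA memB memC memI memM memR) ltac:(side memA memB memC memI memM memR)).
  move=> /(TY b (X := A)) => /(_ ltac:(side memA memB memC memI memM memR) ltac:(side memA memB memC memI memM memR)).
  done.
have exj : x = l0 by lia.
subst x.
rewrite cnt0; last by ceq0 Hlt Hcl l0.
have := TL b (X := M) (Y := C) (x := l0) (y := y) ltac:(side memA memB memC memI memM memR) ltac:(side memA memB memC memI memM memR) ltac:(side memA memB memC memI memM memR) ltac:(side memA memB memC memI memM memR).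
move=> /(TY b (X := A)) => /(_ ltac:(side memA memB memC memI memM memR) ltac:(side memA memB memC memI memM memR)).
by subst A B C I M R; case: (b).
Qed.

Lemma prec_le2 t x y : prec (ord2 t) x y -> le2 t x y /\ ~~ le2 t y x.
Proof. rewrite /prec /le2 => h; split; lia. Qed.

Lemma depth_cnt nu (k l i j : nat) : NR nu -> (forall a b, (a, b) \in nu -> 1 <= a) ->
  (k, l) \in nu -> k <= i -> i < j -> j <= l ->
  ~ (exists k' l', (k', l') \in nu /\ k < k' <= i /\ j <= l' < l) ->
  nesting_depth nu k = cnt nu 1 i j.
Proof.
move=> [Hlt [Hfun [Hinj Hnest]]] Hpos hkl h1 h2 h3 Hinn.
apply: eq_in_count => -[a b]; rewrite mem_undup /= => hab.
have := Hpos _ _ hab; have := Hlt _ _ hab; have := Hlt _ _ hkl; move=> q1 q2 q3.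
apply/idP/idP => /andP[ha hb].
  case: (ltngtP a k) => hak.
  - case: (Hnest _ _ _ _ hab hkl hak); lia.
  - lia.
  - subst a; have := Hfun _ _ _ hab hkl; lia.
case: (ltngtP a k) => hak.
- lia.
- case: (ltngtP b l) => hbl.
  + by case: Hinn; exists a, b; split=> //; lia.
  + case: (Hnest _ _ _ _ hkl hab hak); lia.
  + subst b; have := Hinj _ _ _ hab hkl; lia.
- lia.
Qed.

Theorem lemma5p3 (Delta : finType) (w : seq Delta) (nu : seq (nat * nat)) :
  nested_word w nu ->
  forall i j : nat, 1 <= i -> i < j -> j <= size w ->
    (le2 (Phi_circ w nu) j i <-> le2 (Phi_bullet w nu) i j) /\
    (le2 (Phi_bullet w nu) i j <->
     exists k l, (k, l) \in nu /\ 1 <= k <= i /\ j <= l <= size w /\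
       odd (nesting_depth nu k) /\
       ~ (exists k' l', (k', l') \in nu /\ k < k' <= i /\ j <= l' < l)).
Proof.
move=> [hn [Hr [Hlt [Hfun [Hinj Hnest]]]]] i j hi hij hj.
have HNR : NR nu by [].
have HWN : WN nu 1 (size w).
  by move=> k l hkl; have [] := Hr _ _ hkl; move=> -> ->.
have [_ Pc] := @phi_spec nu HNR (size w).+1 true 1 (size w) ltac:(lia) HWN.
have [_ Pb] := @phi_spec nu HNR (size w).+1 false 1 (size w) ltac:(lia) HWN.
have Ec : le2 (Phi_circ w nu) j i = odd (cnt nu 1 i j).
  have := Pc i j hi hij hj; rewrite /Phi_circ.
  case: (odd _) => /= /prec_le2 [h1 h2]; [exact: h1|exact: negbTE h2].
have Eb : le2 (Phi_bullet w nu) i j = odd (cnt nu 1 i j).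
  have := Pb i j hi hij hj; rewrite /Phi_bullet.
  case: (odd _) => /= /prec_le2 [h1 h2]; [exact: h1|exact: negbTE h2].
rewrite Ec Eb; split=> //; split.
  move=> hodd.
  pose P k := has (fun p : nat * nat => (p.1 == k) && (1 <= k <= i) && (j <= p.2)) nu.
  have exP : exists k, P k.
    have : 0 < cnt nu 1 i j by case: (cnt nu 1 i j) hodd.
    rewrite -has_count => /hasP [[a b]]; rewrite mem_undup /= => hab hp.
    by exists a; apply/hasP; exists (a, b) => //=; rewrite eqxx.
  have ubP : forall k, P k -> k <= i.
    by move=> k /hasP [[a b] _ /=]; lia.
  case: (ex_maxnP exP ubP) => k /hasP [[a l] hal /= /andP[/andP [/eqP eak hk] hjl]] hmax.
  subst a.
  have Hinn : ~ (exists k' l', (k', l') \in nu /\ k < k' <= i /\ j <= l' < l).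
    move=> [k' [l' [hk'l' [h1 h2]]]].
    have : P k' by apply/hasP; exists (k', l') => //=; rewrite eqxx /=; lia.
    move=> /hmax; lia.
  exists k, l; split=> //; split=> //; split; first by have [] := Hr _ _ hal; lia.
  split=> //.
  rewrite (@depth_cnt nu k l i j HNR) //; try lia.
  by move=> a b hab; have [] := Hr _ _ hab; lia.
move=> [k [l [hkl [h1 [h2 [hodd Hinn]]]]]].
rewrite -(@depth_cnt nu k l i j HNR) //; try lia.
by move=> a b hab; have [] := Hr _ _ hab; lia.
Qed.
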